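(* Let $\mathcal{A}$ be a linear hyperplane arrangement in $\mathbb{R}^n$ and let $U_1,U_2$ be $k$-dimensional subspaces of $\mathbb{R}^n$. If $U_1,U_2\in\mathcal{S}_{i,P}$ for some $i\in\{0,\dots,k\}$ and some flat $P\in L(\mathcal{A}^{(k-i)})$, then $L(\mathcal{A}|_{U_1})\cong L(\mathcal{A}|_{U_2})$. In particular, if $\mathcal{A}$ is essential (i.e. $T=\{0\}$) and $\Delta(U_1),\Delta(U_2)\in P^\circ$ for some $P\in L(\mathcal{A}^{(k)})$, then $L(\mathcal{A}|_{U_1})\cong L(\mathcal{A}|_{U_2})$.
   Context: $\mathcal{A}=\{H_i=\{v:\langle\alpha_i,v\rangle=0\}:i=1,\dots,m\}$, $\alpha_i\neq0$, $T=\bigcap_i H_i$. $L(\mathcal{A})$ is the intersection lattice (intersections of subfamilies incl. $\mathbb{R}^n$), $L_k(\mathcal{A})$ its elements of codimension $k$. Restriction: $\mathcal{A}|_U=\{H\cap U:H\in\mathcal{A},U\not\subseteq H\}$. Plücker coordinates: for a $d$-dimensional $W$ with $d\times n$ row-basis matrix $A$, $\Delta(W)=(\Delta_I(W))_{I\in\binom{[n]}{d}}$, $\Delta_I(W)$ the minor of $A$ on columns $I$ (defined up to nonzero scalar). For $X\in L_k(\mathcal{A})$, $H(X)=\{x\in\mathbb{R}^{\binom{[n]}{k}}:\sum_{I}(-1)^{k(k+1)/2+\sum_{i\in I}i}\Delta_{[n]\setminus I}(X)x_I=0\}$, and $\mathcal{A}^{(k)}=\{H(X):X\in L_k(\mathcal{A})\}$.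 For $P$ a flat of an arrangement $\mathcal{B}$, $P^\circ=P\setminus\bigcup\{Q\in L(\mathcal{B}):Q\subsetneq P\}$. $\mathcal{S}_{i,P}=\{U\in\mathrm{Gr}(k,n):\dim(U\cap T)=i,\ \Delta(U\cap(U^\perp+T^\perp))\in P^\circ\}$ for $P\in L(\mathcal{A}^{(k-i)})$. *)

(* Defs.v *)
(* R : realType (the real numbers), subspaces of R^n as row
   spaces of matrices (mxalgebra), the Pluecker space R^{binom([n],d)} as
   functions on d-subsets of 'I_n. *)
From HB Require Import structures.
From mathcomp Require Import all_boot all_order all_algebra.
From mathcomp Require Import reals.
Unset Printing Implicit Defensive.
Import Order.TTheory GRing.Theory Num.Theory.
Local Open Scope ring_scope.

Section Defs.
Variable R : realType.
Variables n m : nat.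
(* the arrangement A = {H_i = alpha_i^perp : i < m} in R^n *)
Variable alpha : 'I_m -> 'rV[R]_n.

Definition hypmx (i : 'I_m) : 'M[R]_n := kermx (alpha i)^T.

(* intersection of the subfamily {H_i : i in S} (S = set0 gives R^n) *)
Definition flatmx (S : {set 'I_m}) : 'M[R]_n := (\bigcap_(i in S) hypmx i)%MS.

Definition Tmx : 'M[R]_n := flatmx [set: 'I_m].

Definition perpmx (U : 'M[R]_n) : 'M[R]_n := kermx U^T.

(* L(A|_U): intersections (inside U) of subfamilies of
   {H_i cap U : U not contained in H_i}, as canonical matrices <<_>> *)
Definition restr_flat (U X : 'M[R]_n) : Prop :=
  exists S : {set 'I_m},
    (forall i, i \in S -> ~~ (U <= hypmx i)%MS) /\
    X = (<< U :&: \bigcap_(i in S) (U :&: hypmx i) >>)%MS.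

(* poset (hence lattice) isomorphism of two families of subspaces
   ordered by inclusion *)
Definition lattice_iso (L1 L2 : 'M[R]_n -> Prop) : Prop :=
  exists f : 'M[R]_n -> 'M[R]_n,
    (forall X, L1 X -> L2 (f X)) /\
    (forall Y, L2 Y -> exists X, L1 X /\ f X = Y) /\
    (forall X Y, L1 X -> L1 Y -> ((X <= Y)%MS <-> (f X <= f Y)%MS)).

Definition ksub (d : nat) := {I : {set 'I_n} | #|I| == d}.

(* column selection: column j picks the j-th element (increasing order) of I *)
Definition selmx (d : nat) (I : {set 'I_n}) : 'M[R]_(n, d) :=
  \matrix_(a < n, j < d)
    ((a \in I) && (#|[set b in I | (val b < val a)%N]| == j))%:R.

(* a d x n row-basis of W (when \rank W = d): first d rows of row_ebase W,
   i.e. row_base W *)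
Definition basismx (d : nat) (W : 'M[R]_n) : 'M[R]_(d, n) :=
  pid_mx d *m row_ebase W.

Definition plucker (d : nat) (W : 'M[R]_n) (I : {set 'I_n}) : R :=
  \det (basismx d W *m selmx d I).

Definition plvec (d : nat) (W : 'M[R]_n) : ksub d -> R :=
  fun I => plucker d W (val I).

(* H(X) for X = flatmx S of codimension d (indices of [n] are 1-based) *)
Definition Hk (d : nat) (S : {set 'I_m}) (x : ksub d -> R) : Prop :=
  \sum_(I : ksub d)
     (-1) ^+ ((d * d.+1) %/ 2 + \sum_(a in val I) (val a).+1)%N
     * plucker (n - d)%N (flatmx S) (~: val I) * x I = 0.

(* L(A^{(d)}): intersections of subfamilies of {H(X) : X in L_d(A)};
   every X in L_d(A) is flatmx S for some S with codim d *)
Definition flat_k (d : nat) (P : (ksub d -> R) -> Prop) : Prop :=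
  exists F : {set {set 'I_m}},
    (forall S, S \in F -> (\rank (flatmx S) + d)%N = n) /\
    (forall x, P x <-> (forall S, S \in F -> Hk d S x)).

Definition flat_interior (d : nat) (P : (ksub d -> R) -> Prop)
  (x : ksub d -> R) : Prop :=
  P x /\
  (forall Q, flat_k d Q -> (forall y, Q y -> P y) -> (exists y, P y /\ ~ Q y) ->
     ~ Q x).

Definition S_iP (k i : nat) (P : (ksub (k - i)%N -> R) -> Prop) (U : 'M[R]_n)
  : Prop :=
  \rank U = k /\ \rank (U :&: Tmx)%MS = i /\
  flat_interior (k - i)%N P (plvec (k - i)%N (U :&: (perpmx U + perpmx Tmx))%MS).

End Defs.

Arguments hypmx {R n m} alpha i.
Arguments flatmx {R n m} alpha S.
Arguments Tmx {R n m} alpha.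
Arguments perpmx {R n} U.
Arguments restr_flat {R n m} alpha U X.
Arguments lattice_iso {R n} L1 L2.
Arguments ksub n d : clear implicits.
Arguments selmx {R n} d I.
Arguments basismx {R n} d W.
Arguments plucker {R n} d W I.
Arguments plvec {R n} d W I.
Arguments Hk {R n m} alpha d S x.
Arguments flat_k {R n m} alpha d P.
Arguments flat_interior {R n m} alpha d P x.
Arguments S_iP {R n m} alpha k i P U.

(* Main.v *)
Require Import Defs.
From HB Require Import structures.
From mathcomp Require Import all_boot all_order all_algebra.
From mathcomp Require Import reals.
From mathcomp Require Import zify.
From mathcomp Require Import ring.
From Stdlib Require Import ClassicalEpsilon.
Set Implicit Arguments. Unset Strict Implicit. Unset Printing Implicit Defensive.
Import Order.TTheory GRing.Theory Num.Theory.
Local Open Scope ring_scope.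

Section Lap.
Variable R : realType.

Definition rk n (I : {set 'I_n}) (a : 'I_n) : nat :=
  #|[set b in I | (val b < val a)%N]|.

Lemma selE n d (I : {set 'I_n}) a c :
  (selmx (R:=R) d I) a c = ((a \in I) && (rk I a == c))%:R.
Proof. by rewrite mxE. Qed.

Lemma rk_le n (I : {set 'I_n}) a b : (val a <= val b)%N -> (rk I a <= rk I b)%N.
Proof.
move=> ab; apply: subset_leq_card; apply/subsetP => x; rewrite !inE.
by case/andP=> -> /= xa; apply: leq_trans xa ab.
Qed.

Lemma rk_lt n (I : {set 'I_n}) a b : a \in I -> (val a < val b)%N -> (rk I a < rk I b)%N.
Proof.
move=> aI ab; apply: proper_card; rewrite properE; apply/andP; split.
  apply/subsetP => x; rewrite !inE; case/andP=> -> /= xa.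
  by apply: ltn_trans xa ab.
apply/subsetPn; exists a; rewrite !inE ?aI /= ?ltnn ?andbF //=.
Qed.

Lemma rk_inj n (I : {set 'I_n}) a b : a \in I -> b \in I -> rk I a = rk I b -> a = b.
Proof.
move=> aI bI e; apply/val_inj/eqP; case: (ltngtP (val a) (val b)) => // h.
  by have := rk_lt aI h; rewrite e ltnn.
by have := rk_lt bI h; rewrite e ltnn.
Qed.

Lemma rk_ltI n (I : {set 'I_n}) a : a \in I -> (rk I a < #|I|)%N.
Proof.
move=> aI; apply: proper_card; rewrite properE; apply/andP; split.
  by apply/subsetP => x; rewrite !inE; case/andP.
apply/subsetPn; exists a => //; rewrite !inE ltnn andbF //.
Qed.

Lemma rk_surj n (I : {set 'I_n}) c : (c < #|I|)%N -> exists2 a, a \in I & rk I a = c.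
Proof.
move=> cI.
set N := #|I|.
have rkN : forall a, a \in I -> (rk I a < N.+1)%N by move=> a aI; apply/ltnW/rk_ltI.
pose h (a : 'I_n) : 'I_N.+1 := inord (rk I a).
have hinj : {in I &, injective h}.
  move=> a b aI bI /(congr1 val) /=; rewrite !inordK ?rkN //; exact: rk_inj.
have sub : h @: I \subset [set~ ord_max].
  apply/subsetP => x /imsetP [a aI ->]; rewrite !inE; apply/eqP => /(congr1 val) /=.
  by rewrite inordK ?rkN // => e; have := rk_ltI aI; rewrite e ltnn.
have E : h @: I = [set~ ord_max].
  by apply/eqP; rewrite eqEcard sub /= cardsC1 card_in_imset // card_ord.
have : (inord c : 'I_N.+1) \in [set~ ord_max].
  rewrite !inE; apply/eqP => /(congr1 val) /=; rewrite inordK ?ltnS ?(ltnW cI) //.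
  by move=> e; move: cI; rewrite e ltnn.
rewrite -E => /imsetP [a aI /(congr1 val)] /=; rewrite !inordK ?rkN ?ltnS ?(ltnW cI) //.
by move=> e; exists a.
Qed.

Lemma lift_ltE n (j : 'I_n.+1) (a b : 'I_n) :
  (val (lift j a) < val (lift j b))%N = (val a < val b)%N.
Proof. rewrite /= /bump; case: (leqP j a); case: (leqP j b) => /=; lia. Qed.

Lemma lift_leE n (j : 'I_n.+1) (a : 'I_n) :
  val (lift j a) = (val a + (val j <= val a))%N.
Proof. by rewrite /= /bump addnC. Qed.

Lemma notin_lift n (j : 'I_n.+1) (I : {set 'I_n}) : j \notin lift j @: I.
Proof. by apply/imsetP => -[a _ /eqP]; rewrite (negbTE (neq_lift _ _)). Qed.

Lemma rk_lift n (j : 'I_n.+1) (I : {set 'I_n}) a :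
  rk (lift j @: I) (lift j a) = rk I a.
Proof.
rewrite /rk -(card_imset _ (@lift_inj _ j)); congr (#|pred_of_set _|).
apply/setP => b; rewrite inE; case: (unliftP j b) => [b' -> | ->].
  by rewrite !mem_imset ?inE ?lift_ltE //; exact: lift_inj.
rewrite (negbTE (notin_lift _ _)) /=; apply/esym/negbTE/imsetP => -[c _ /eqP].
by rewrite (negbTE (neq_lift _ _)).
Qed.

Lemma col'_sel r n d (A : 'M[R]_(r, n.+1)) (j : 'I_n.+1) (I : {set 'I_n}) :
  col' j A *m selmx d I = A *m selmx d (lift j @: I).
Proof.
apply/matrixP => x c; rewrite mxE [RHS]mxE (bigD1_ord j) //= selE (negbTE (notin_lift _ _)) /=.
rewrite mulr0 add0r; apply: eq_bigr => a _; rewrite mxE !selE rk_lift.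
by rewrite mem_imset //; exact: lift_inj.
Qed.

Lemma rk_D1 n (I : {set 'I_n}) a b :
  rk I b = (rk (I :\ a) b + ((a \in I) && (val a < val b)))%N.
Proof.
rewrite /rk (cardsD1 a [set x in I | (val x < val b)%N]) inE addnC; congr (_ + _)%N.
by congr (#|pred_of_set _|); apply/setP => x; rewrite !inE andbA.
Qed.

Lemma col'_selD1 n d (I : {set 'I_n}) (a : 'I_n) (c : 'I_d.+1) :
  a \in I -> rk I a = c ->
  col' c (selmx (R:=R) d.+1 I) = selmx d (I :\ a).
Proof.
move=> aI ra; apply/matrixP => b c'; rewrite mxE !selE /=.
case: (eqVneq b a) => [-> | ba].
  by rewrite !inE eqxx /= ra (negbTE (neq_bump _ _)) andbF.
rewrite !inE ba /=; case bI: (b \in I) => //=.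
rewrite (rk_D1 I a b) aI /= /bump.
case: (ltngtP (val a) (val b)) => h.
- have h1 := rk_lt aI h; rewrite ra (rk_D1 I a b) aI h /= in h1.
  move: h1; set r := rk _ b; move: (nat_of_ord c') => k h1.
  by case: (leqP c k) => ? /=; congr ((nat_of_bool _)%:R); apply/idP/idP => /eqP ?; apply/eqP; lia.
- have h1 := rk_lt bI h; rewrite ra (rk_D1 I a b) (ltnNge (val a)) (ltnW h) andbF /= in h1.
  move: h1; set r := rk _ b; move: (nat_of_ord c') => k h1.
  by case: (leqP c k) => ? /=; congr ((nat_of_bool _)%:R); apply/idP/idP => /eqP ?; apply/eqP; lia.
- by move: ba; rewrite -(inj_eq val_inj) h eqxx.
Qed.

Lemma row'col'_mul p n k (A : 'M[R]_(p.+1, n)) (B : 'M[R]_(n, k.+1)) i j :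
  row' i (col' j (A *m B)) = row' i A *m col' j B.
Proof. by apply/matrixP => x y; rewrite !mxE; apply: eq_bigr => z _; rewrite !mxE. Qed.

Lemma mulsel_entry r n d (A : 'M[R]_(r, n)) (I : {set 'I_n}) x (c : 'I_d) a :
  a \in I -> rk I a = c -> (A *m selmx d I) x c = A x a.
Proof.
move=> aI ra; rewrite mxE (bigD1 a) //= selE aI ra eqxx mulr1 big1 ?addr0 //.
move=> b ba; rewrite selE; case bI: (b \in I) => /=; last by rewrite mulr0.
case: eqP => [e|]; last by rewrite mulr0.
by move: ba; rewrite (rk_inj bI aI) ?eqxx // e ra.
Qed.

Lemma det_sel_row0 p n (A : 'M[R]_(p.+1, n)) (I : {set 'I_n}) : #|I| = p.+1 ->
  \det (A *m selmx p.+1 I) =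
  \sum_(a in I) A 0 a * (-1) ^+ rk I a * \det (row' 0 A *m selmx p (I :\ a)).
Proof.
move=> cI; rewrite (expand_det_row _ ord0).
rewrite (partition_big (fun a => (inord (rk I a) : 'I_p.+1)) predT) //=.
apply: eq_bigr => c _.
have [a aI ra] : exists2 a, a \in I & rk I a = c by apply: rk_surj; rewrite cI.
rewrite (big_pred1 a); last first.
  move=> x /=; case xI: (x \in I) => /=; last by apply/esym/negbTE; apply: contraFneq xI => ->.
  apply/eqP/eqP => [/(congr1 val) /=|->]; last by apply/val_inj; rewrite /= inordK ra.
  rewrite inordK; first by move=> e; apply: (rk_inj xI aI); rewrite e ra.
  by rewrite -cI; apply: rk_ltI.
rewrite (mulsel_entry _ _ aI ra) /cofactor row'col'_mul (col'_selD1 aI ra) add0n ra.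
by rewrite mulrA.
Qed.

Definition eps n d (I : {set 'I_n}) : R :=
  (-1) ^+ ((d * d.+1) %/ 2 + \sum_(a in I) (val a).+1)%N.

Lemma card_lt_ord n (a : 'I_n) : #|[set b : 'I_n | (val b < val a)%N]| = val a.
Proof.
have le : (val a <= n)%N by apply/ltnW/ltn_ord.
have -> : [set b : 'I_n | (val b < val a)%N] = widen_ord le @: [set: 'I_(val a)].
  apply/setP => b; rewrite inE; apply/idP/imsetP => [ba|[b' _ ->]] /=; last exact: ltn_ord.
  by exists (Ordinal ba); [rewrite inE | apply/val_inj].
by rewrite card_imset ?cardsT ?card_ord //; by move=> x y /(congr1 val) /= /val_inj.
Qed.

Lemma selT n : selmx (R:=R) n [set: 'I_n] = 1%:M.
Proof.
apply/matrixP => a c; rewrite selE !mxE inE /=.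
have -> : rk [set: 'I_n] a = val a.
  by rewrite /rk -[RHS](card_lt_ord a); congr (#|pred_of_set _|); apply/setP => x; rewrite !inE.
by [].
Qed.

Lemma triang p : ((p.+1 * p.+2) %/ 2 = (p * p.+1) %/ 2 + p.+1)%N.
Proof.
have -> : (p.+1 * p.+2 = p.+1 * 2 + p * p.+1)%N by lia.
by rewrite divnMDl // addnC.
Qed.

Lemma sum_card n (A : {set 'I_n}) (P : pred 'I_n) :
  (\sum_(a in A) (P a : nat) = #|[set a in A | P a]|)%N.
Proof.
rewrite -sum1_card [RHS]big_mkcond [LHS]big_mkcond /=; apply: eq_bigr => a _.
by rewrite !inE; case: (a \in A); case: (P a).
Qed.

Lemma lift_eqj n (j : 'I_n.+1) (x : 'I_n) : (lift j x == j) = false.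
Proof. by rewrite eq_sym (negbTE (neq_lift _ _)). Qed.

Lemma setC_lift n (j : 'I_n.+1) (I : {set 'I_n}) :
  ~: (j |: lift j @: I) = lift j @: ~: I.
Proof.
apply/setP => x; rewrite !inE; case: (unliftP j x) => [x' ->|->].
  rewrite lift_eqj /= !mem_imset ?inE //; exact: lift_inj.
by rewrite eqxx /= (negbTE (notin_lift _ _)).
Qed.

Lemma preim_lift n (j : 'I_n.+1) (I : {set 'I_n}) :
  lift j @^-1: (j |: lift j @: I) = I.
Proof.
apply/setP => x; rewrite !inE lift_eqj /= mem_imset //; exact: lift_inj.
Qed.

Lemma lift_preim n (j : 'I_n.+1) (I : {set 'I_n.+1}) :
  j \in I -> j |: lift j @: (lift j @^-1: I) = I.
Proof.
move=> jI; apply/setP => x; rewrite !inE; case: (unliftP j x) => [x' ->|->].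
  rewrite lift_eqj /= mem_imset ?inE //; exact: lift_inj.
by rewrite eqxx jI.
Qed.

Lemma eps_lift n p (j : 'I_n.+1) (I : {set 'I_n}) : #|I| = p ->
  eps p.+1 (j |: lift j @: I) * (-1) ^+ rk (j |: lift j @: I) j =
  (-1) ^+ (0 + j)%N * eps p I.
Proof.
move=> cI; rewrite /eps -!exprD.
have e1 : (\sum_(a in j |: lift j @: I) (val a).+1 =
    j.+1 + \sum_(a in I) (val a).+1 + \sum_(a in I) ((val j <= val a) : nat))%N.
  rewrite big_setU1 ?notin_lift //= big_imset /=; last by move=> x y _ _; apply: lift_inj.
  rewrite -addnA -big_split /=; congr (_ + _)%N; apply: eq_bigr => a _.
  by rewrite /bump; lia.
have e2 : rk (j |: lift j @: I) j = #|[set a in I | (val a < val j)%N]|.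
  rewrite (rk_D1 _ j) setU1K ?notin_lift // setU11 ltnn andbF addn0.
  rewrite /rk -(card_imset _ (@lift_inj _ j)); congr (#|pred_of_set _|).
  apply/setP => b; rewrite inE; case: (unliftP j b) => [b' -> | ->].
    rewrite !mem_imset ?inE; try exact: lift_inj.
    case: (b' \in I) => //=; rewrite /bump; move: (nat_of_ord b') => k.
    by case: leqP => ?; apply/idP/idP => ?; lia.
  by rewrite ltnn andbF !(negbTE (notin_lift _ _)).
have e3 : (\sum_(a in I) ((val j <= val a) : nat) + #|[set a in I | (val a < val j)%N]| = p)%N.
  rewrite -sum_card -big_split /= -cI -sum1_card; apply: eq_bigr => a _.
  by case: leqP.
rewrite e1 e2 triang.
set s1 := (\sum_(a in I) ((val j <= val a) : nat))%N.
set s2 := #|[set a in I | (val a < val j)%N]|.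
set t := ((p * p.+1) %/ 2)%N.
set u := (\sum_(a in I) (val a).+1)%N.
have -> : (t + p.+1 + (j.+1 + u + s1) + s2 = (0 + j + (t + u)) + 2 * p.+1)%N by lia.
by rewrite exprD -[X in _ * X]signr_odd oddM /= mulr1.
Qed.

Lemma usub_row'col' p q (M : 'M[R]_(p.+1 + q)) (j : 'I_(p.+1 + q)) :
  usubmx (row' 0 (col' j M) : 'M_(p + q)) = col' j (row' 0 (usubmx M)).
Proof. by apply/matrixP => x y; rewrite !mxE; congr (M _ _); apply/val_inj. Qed.

Lemma dsub_row'col' p q (M : 'M[R]_(p.+1 + q)) (j : 'I_(p.+1 + q)) :
  dsubmx (row' 0 (col' j M) : 'M_(p + q)) = col' j (dsubmx M).
Proof. by apply/matrixP => x y; rewrite !mxE; congr (M _ _); apply/val_inj. Qed.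

Lemma laplace p q (M : 'M[R]_(p + q)) :
  \det M = \sum_(I : {set 'I_(p + q)} | #|I| == p)
     eps p I * \det (usubmx M *m selmx p I) * \det (dsubmx M *m selmx q (~: I)).
Proof.
elim: p M => [|p IH] M.
  rewrite (big_pred1 set0); last by move=> I; rewrite /= cards_eq0.
  rewrite /eps big_set0 /= expr0 mul1r det_mx00 mul1r setC0 selT mulmx1.
  by congr (\det _); apply/matrixP => x y; rewrite mxE; congr (M _ _); apply/val_inj.
rewrite (expand_det_row _ ord0).
set U := usubmx M; set D := dsubmx M.
transitivity (\sum_(j < (p.+1 + q)) \sum_(I : {set 'I_(p + q)} | #|I| == p)
   M 0 j * ((-1) ^+ (0 + j)%N * (eps p I * \det (row' 0 U *m selmx p (lift j @: I))
      * \det (D *m selmx q (lift j @: ~: I))))).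
  apply: eq_bigr => j _; rewrite /cofactor (IH (row' 0 (col' j M))).
  rewrite usub_row'col' dsub_row'col' !big_distrr /=; apply: eq_bigr => I _.
  by rewrite !col'_sel.
transitivity (\sum_(I : {set 'I_(p.+1 + q)} | #|I| == p.+1) \sum_(a in I)
   eps p.+1 I * (U 0 a * (-1) ^+ rk I a * \det (row' 0 U *m selmx p (I :\ a)))
     * \det (D *m selmx q (~: I))); last first.
  apply: eq_bigr => I /eqP cI; rewrite (det_sel_row0 _ cI).
  by rewrite -big_distrl -big_distrr.

rewrite [RHS](exchange_big_dep predT) //=; apply: eq_bigr => j _.
rewrite [RHS](reindex_onto (fun I : {set 'I_(p + q)} => j |: lift j @: I)
                           (fun I => lift j @^-1: I)) /=; last first.
  by move=> I /andP[_ jI]; exact: lift_preim.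
apply: eq_big => [I|I /eqP cI].
  rewrite preim_lift eqxx andbT setU11 andbT cardsU1 notin_lift card_imset //.
  exact: lift_inj.
rewrite setU1K ?notin_lift // setC_lift.
have -> : U 0 j = M 0 j by rewrite mxE; congr (M _ _); apply/val_inj.
have E := eps_lift j cI.
transitivity (M 0 j * (eps p.+1 (j |: lift j @: I) * (-1) ^+ rk (j |: lift j @: I) j) *
   \det (row' 0 U *m selmx p (lift j @: I)) * \det (D *m selmx q (lift j @: ~: I))).
  by rewrite E; ring.
by ring.
Qed.

End Lap.


Section B.
Variable R : realType.

Lemma sum_ksub n d (F : {set 'I_n} -> R) :
  \sum_(I : ksub n d) F (val I) = \sum_(I : {set 'I_n} | #|I| == d) F I.
Proof.
rewrite [RHS](reindex_omap (val : ksub n d -> {set 'I_n}) insub); last first.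
  by move=> I cI; rewrite insubT.
by apply: eq_bigl => -[I cI] /=; rewrite cI insubT /= eqxx.
Qed.

Lemma basis_eq n d (W : 'M[R]_n) : \rank W = d -> (basismx d W :=: W)%MS.
Proof. by move=> <-; exact: eq_row_base. Qed.

Lemma pairing n d (W X : 'M[R]_n) : (d <= n)%N -> \rank W = d -> \rank X = (n - d)%N ->
  (\sum_(I : ksub n d) (-1) ^+ ((d * d.+1) %/ 2 + \sum_(a in val I) (val a).+1)%N
      * plucker (n - d) X (~: val I) * plvec d W I = 0) <-> (\rank (W :&: X) != 0%N).
Proof.
move=> dn rW rX.
rewrite (@sum_ksub n d (fun I => (-1) ^+ ((d * d.+1) %/ 2 + \sum_(a in I) (val a).+1)%N
      * plucker (n - d) X (~: I) * plucker d W I)).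
move: rX; have [q Eq] : exists q, n = (d + q)%N by exists (n - d)%N; rewrite subnKC.
subst n.
rewrite addKn => rX.
set A := basismx d W; set B := basismx q X.
have -> : \sum_(I : {set 'I_(d + q)} | #|I| == d)
    (-1) ^+ ((d * d.+1) %/ 2 + \sum_(a in I) (val a).+1)%N * plucker q X (~: I) * plucker d W I
  = \det (col_mx A B).
  rewrite (laplace (col_mx A B)) col_mxKu col_mxKd; apply: eq_bigr => I _.
  by rewrite /plucker -/A -/B /eps mulrAC.
have rM : \rank (col_mx A B) = \rank (W + X)%MS.
  have e1 := addsmxE A B; have e2 := adds_eqmx (basis_eq rW) (basis_eq rX).
  by transitivity (\rank (A + B)%MS); [rewrite e1 | rewrite e2].
have := mxrank_sum_cap W X; rewrite rW rX -rM => hs.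
split.
  move=> d0; apply/negP => /eqP r0; move: hs; rewrite r0 addn0 => hs.
  have : col_mx A B \in unitmx by rewrite -row_free_unit /row_free hs.
  by rewrite unitmxE unitfE d0 eqxx.
move=> r0; apply/eqP; apply: contraNeq r0 => d0.
have : col_mx A B \in unitmx.
  rewrite unitmxE unitfE; apply/negP => /eqP h; move: d0; rewrite h eqxx; done.

rewrite -row_free_unit /row_free => /eqP hr; move: hs; rewrite hr => hs; apply/eqP; lia.
Qed.

End B.


Section C.
Variable R : realType.
Variables n m : nat.
Variable alpha : 'I_m -> 'rV[R]_n.
Hypothesis alpha_nz : forall j, alpha j != 0.

Local Notation F := (flatmx alpha).
Local Notation H := (hypmx alpha).

Lemma n_gt0 (i : 'I_m) : (0 < n)%N.
Proof.
have := alpha_nz i; case: n (alpha i) => // a; by rewrite (thinmx0 a) eqxx.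
Qed.

Lemma rank_hyp i : \rank (H i) = n.-1.
Proof.
rewrite /hypmx mxrank_ker mxrank_tr -subn1; congr (_ - _)%N.
apply/eqP; rewrite eqn_leq rank_leq_row lt0n mxrank_eq0 alpha_nz.
done.
Qed.

Lemma set_ind (P : {set 'I_m} -> Prop) :
  P set0 -> (forall (i : 'I_m) (C : {set 'I_m}), i \notin C -> P C -> P (i |: C)) -> forall C, P C.
Proof.
move=> P0 PS C; move: {2}#|C| (erefl #|C|) => k; elim: k C => [|k IH] C cC.
  by move/eqP: cC; rewrite cards_eq0 => /eqP ->.
have : (0 < #|C|)%N by rewrite cC.
case/card_gt0P => i iC; rewrite -(setD1K iC); apply: PS; first by rewrite setD11.
by apply: IH; move: cC; rewrite (cardsD1 i) iC add1n => -[].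
Qed.

Lemma subFU k (A : 'M_(k, n)) (C D : {set 'I_m}) : (A <= F (C :|: D))%MS = (A <= F C)%MS && (A <= F D)%MS.
Proof.
apply/sub_bigcapmxP/andP => [h|[/sub_bigcapmxP h1 /sub_bigcapmxP h2] i].
  by split; apply/sub_bigcapmxP => i iC; apply: h; rewrite inE iC ?orbT.
by rewrite inE => /orP[]; [apply: h1|apply: h2].
Qed.

Lemma subFU1 k (A : 'M_(k, n)) i (C : {set 'I_m}) : (A <= F (i |: C))%MS = (A <= H i)%MS && (A <= F C)%MS.
Proof.
rewrite subFU; congr (_ && _); apply/sub_bigcapmxP/idP => [h|h j].
  by apply: h; rewrite inE.
by rewrite inE => /eqP ->.
Qed.

Lemma subFS (C D : {set 'I_m}) : C \subset D -> (F D <= F C)%MS.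
Proof.
move=> CD; apply/sub_bigcapmxP => i iC; apply: (bigcapmx_inf i) => //.
exact: (subsetP CD).
Qed.

Lemma F0 : F set0 = 1%:M.
Proof. by rewrite /flatmx big_pred0 // => i; rewrite inE. Qed.

Lemma rank_eqP (A B : 'M[R]_n) :
  (forall u : 'rV_n, (u <= A) = (u <= B))%MS -> \rank A = \rank B.
Proof. by move/rV_eqP; exact: eqmx_rank. Qed.

Lemma cap_hyp_rk (Z : 'M[R]_n) i :
  (\rank Z <= (\rank (Z :&: H i)).+1)%N /\
  (~~ (Z <= H i)%MS -> (\rank (Z :&: H i)).+1 = \rank Z).
Proof.
have := mxrank_sum_cap Z (H i); rewrite rank_hyp => hs.
have n0 := n_gt0 i.
have le : (\rank (Z + H i)%MS <= n)%N by apply: rank_leq_col.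
split; first by lia.
move=> nZ; have hl := mxrank_leqif_sup (addsmxSr Z (H i)).
have : (\rank (H i) < \rank (Z + H i)%MS)%N.
  by rewrite (ltn_leqif hl) addsmx_sub submx_refl andbT.
rewrite rank_hyp; lia.
Qed.

Lemma capF1 (Y : 'M[R]_n) i (C : {set 'I_m}) :
  \rank (Y :&: F (i |: C)) = \rank ((Y :&: F C) :&: H i).
Proof.
apply: rank_eqP => u; rewrite !sub_capmx subFU1.
by case: (u <= Y)%MS; case: (u <= H i)%MS; case: (u <= F C)%MS.
Qed.

Lemma lower (Y : 'M[R]_n) (C : {set 'I_m}) : (\rank Y <= \rank (Y :&: F C) + #|C|)%N.
Proof.
move: C; apply: set_ind; first by rewrite F0 capmx1 cards0 addn0.
move=> i C iC IH; rewrite capF1 cardsU1 iC.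
have [h _] := cap_hyp_rk (Y :&: F C)%MS i; lia.
Qed.

Lemma greedy (Y : 'M[R]_n) (S : {set 'I_m}) : exists C : {set 'I_m}, [/\ C \subset S, (Y :&: F C == Y :&: F S)%MS
   & (\rank (Y :&: F C) + #|C| = \rank Y)%N].
Proof.
move: S; apply: set_ind.
  by exists set0; rewrite sub0set !submx_refl F0 capmx1 cards0 addn0.
move=> i S iS [C [CS E r]].
have EE := rV_eqP E.
case: (boolP (Y :&: F C <= H i)%MS) => h.
  exists C; split => //.
    by apply: subset_trans CS _; apply: subsetU1.
  apply/rV_eqP => u; have := EE u; rewrite !sub_capmx subFU1 => e.
  apply/idP/idP.
    move=> hu; have hH : (u <= H i)%MS by apply: submx_trans h; rewrite sub_capmx.
    by move: hu; rewrite e hH.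
  by rewrite e; case/andP => -> /andP[_ ->].
have iC : i \notin C by apply: contra iS; apply: (subsetP CS).
exists (i |: C); split.
- exact: setUS.
- apply/rV_eqP => u; have := EE u; rewrite !sub_capmx !subFU1 => e.
  by move: e; case: (u <= Y)%MS; case: (u <= H i)%MS => //=; move=> ->.
- have [_ h2] := cap_hyp_rk (Y :&: F C)%MS i.
  rewrite capF1 cardsU1 iC; have := h2 h; lia.
Qed.

Lemma core_le (W1 W2 : 'M[R]_n) d :
  \rank W1 = d -> \rank (W1 :&: Tmx alpha)%MS = 0%N ->
  (forall B, (\rank (F B) + d)%N = n -> \rank (W1 :&: F B)%MS = 0%N ->
     \rank (W2 :&: F B)%MS = 0%N) ->
  forall S, (\rank (W2 :&: F S)%MS <= \rank (W1 :&: F S)%MS)%N.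
Proof.
move=> rW1 T0 hyp S.
have [C [CS E1 r1]] := greedy W1 S.
set Y := (W1 :&: F C)%MS.
have [D [DS E2 r2]] := greedy Y (~: C).
have Y0 : \rank (Y :&: F (~: C))%MS = 0%N.
  apply/eqP; rewrite -leqn0 -T0; apply: mxrankS; apply/rV_subP => u.
  rewrite /Y /Tmx -(setUCr C) !sub_capmx subFU.
  by case/andP => /andP[-> ->] ->.
have YD0 : \rank (Y :&: F D)%MS = 0%N by rewrite (eqmx_rank E2).
have rB0 : \rank (W1 :&: F (C :|: D))%MS = 0%N.
  rewrite -YD0; apply: rank_eqP => u; rewrite /Y !sub_capmx subFU.
  by rewrite andbA.
have CD0 : #|C :&: D| = 0%N.
  apply/eqP; rewrite cards_eq0; apply/eqP/setP => x; rewrite !inE.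
  by apply/negP => /andP[xC xD]; have := subsetP DS x xD; rewrite inE xC.
have cB : #|C :|: D| = d.
  have := cardsU C D; rewrite CD0 subn0 => ->; rewrite YD0 rW1 in r2 r1; move: r1 r2; rewrite /Y; lia.
have rFB : (\rank (F (C :|: D)) + d)%N = n.
  have := lower 1%:M (C :|: D); rewrite cap1mx mxrank1 cB => h1.
  have := mxrank_sum_cap W1 (F (C :|: D)); rewrite rB0 rW1 addn0 => h2.
  have : (\rank (W1 + F (C :|: D))%MS <= n)%N by apply: rank_leq_col.
  lia.
have r2B := hyp _ rFB rB0.
have L := lower (W2 :&: F C)%MS D.
have e3 : \rank ((W2 :&: F C) :&: F D)%MS = 0%N.
  rewrite -r2B; apply: rank_eqP => u; rewrite !sub_capmx subFU.
  by rewrite andbA.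
have L2 : (\rank (W2 :&: F S)%MS <= \rank (W2 :&: F C)%MS)%N.
  by apply: mxrankS; apply: capmxS => //; apply: subFS.
have e4 : \rank (W1 :&: F S)%MS = \rank Y by rewrite (eqmx_rank E1).
lia.
Qed.

End C.


Section D.
Variable R : realType.
Variables n m : nat.
Variable alpha : 'I_m -> 'rV[R]_n.
Hypothesis alpha_nz : forall j, alpha j != 0.

Local Notation F := (flatmx alpha).
Local Notation H := (hypmx alpha).

Lemma interior_transfer d (P : (ksub n d -> R) -> Prop) (x y : ksub n d -> R) :
  flat_k alpha d P -> flat_interior alpha d P x -> flat_interior alpha d P y ->
  forall S, (\rank (F S) + d)%N = n -> Hk alpha d S x -> Hk alpha d S y.
Proof.
move=> [FF [hF hP]] [Px intx] [Py _] S rS hx.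
move: hx; rewrite /Hk => hx; set sy := (\sum_(I : ksub n d) _ * _ * y I).
case: (eqVneq sy 0) => // ny; exfalso.
pose Q := fun z => P z /\ Hk alpha d S z.
have fQ : flat_k alpha d Q.
  exists (S |: FF); split.
    by move=> S'; rewrite !inE => /orP[/eqP -> //|]; apply: hF.
  move=> z; split.
    move=> [Pz hz] S'; rewrite !inE => /orP[/eqP -> //|]; exact: (proj1 (hP z) Pz).
  move=> h; split; last by apply: h; rewrite setU11.
  by apply/hP => S' S'F; apply: h; rewrite inE S'F orbT.
apply: (intx Q fQ) => //; first by move=> z [].
exists y; split => // -[_]; rewrite /Hk -/sy => hy.
by rewrite hy eqxx in ny.
Qed.

Lemma core (W1 W2 : 'M[R]_n) d (P : (ksub n d -> R) -> Prop) :
  \rank W1 = d -> \rank W2 = d ->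
  \rank (W1 :&: Tmx alpha)%MS = 0%N -> \rank (W2 :&: Tmx alpha)%MS = 0%N ->
  flat_k alpha d P -> flat_interior alpha d P (plvec d W1) ->
  flat_interior alpha d P (plvec d W2) ->
  forall S, \rank (W1 :&: F S)%MS = \rank (W2 :&: F S)%MS.
Proof.
move=> rW1 rW2 T1 T2 fP i1 i2.
have dn : (d <= n)%N by rewrite -rW1 rank_leq_col.
have key : forall W W' : 'M[R]_n, \rank W = d -> \rank W' = d ->
    flat_interior alpha d P (plvec d W) -> flat_interior alpha d P (plvec d W') ->
    forall B, (\rank (F B) + d)%N = n -> \rank (W :&: F B)%MS = 0%N ->
    \rank (W' :&: F B)%MS = 0%N.
  move=> W W' rW rW' iW iW' B rB r0; apply/eqP; apply/negPn/negP => nz.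
  have rFB : \rank (F B) = (n - d)%N by move: rB; set r := \rank (F B); lia.
  have h' : Hk alpha d B (plvec d W') by apply/(pairing dn rW' rFB).
  have h := interior_transfer fP iW' iW rB h'.
  by have := (proj1 (pairing dn rW rFB)) h; rewrite r0.
move=> S; apply/eqP; rewrite eqn_leq.
rewrite (core_le alpha_nz rW2 T2 (key _ _ rW2 rW1 i2 i1)).
by rewrite (core_le alpha_nz rW1 T1 (key _ _ rW1 rW2 i1 i2)).
Qed.

Lemma orth (a b : 'rV[R]_n) (A : 'M[R]_n) :
  (a <= perpmx A)%MS -> (b <= A)%MS -> a *m b^T = 0.
Proof.
rewrite /perpmx sub_kermx => /eqP aA /submxP [w ->].
by rewrite trmx_mul mulmxA aA mul0mx.
Qed.

Lemma self_orth (v : 'rV[R]_n) : v *m v^T = 0 -> v = 0.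
Proof.
move=> h; apply/rowP => j; have : (v *m v^T) 0 0 = 0 by rewrite h mxE.
rewrite mxE => s.
have pos : forall i, predT i -> 0 <= v 0 i * v^T i 0.
  by move=> i _; rewrite !mxE -expr2 sqr_ge0.
have := @psumr_eq0P _ _ predT (fun i => v 0 i * v^T i 0) pos s j isT.
rewrite mxE => /eqP; rewrite mulf_eq0 orbb => /eqP ->. by rewrite mxE.
Qed.

Lemma rank0P (A : 'M[R]_n) : (forall v : 'rV_n, (v <= A)%MS -> v = 0) -> \rank A = 0%N.
Proof.
move=> h; apply/eqP; rewrite mxrank_eq0 -submx0; apply/rV_subP => v /h ->.
exact: sub0mx.
Qed.

Lemma rank0_sub (A : 'M[R]_n) (v : 'rV_n) : \rank A = 0%N -> (v <= A)%MS -> v = 0.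
Proof. by move/eqP; rewrite mxrank_eq0 => /eqP ->; rewrite submx0 => /eqP. Qed.

Lemma rk_perp (A : 'M[R]_n) : \rank (perpmx A) = (n - \rank A)%N.
Proof. by rewrite /perpmx mxrank_ker mxrank_tr. Qed.

Lemma decomp (U T : 'M[R]_n) :
  let W := (U :&: (perpmx U + perpmx T))%MS in
  [/\ \rank W = (\rank U - \rank (U :&: T)%MS)%N, \rank (W :&: T)%MS = 0%N &
      forall Z : 'M[R]_n, (T <= Z)%MS ->
        \rank (U :&: Z)%MS = (\rank (U :&: T)%MS + \rank (W :&: Z)%MS)%N].
Proof.
move=> W.
set V := (perpmx U + perpmx T)%MS.
have UpU : \rank (U :&: perpmx U)%MS = 0%N.
  apply: rank0P => v; rewrite sub_capmx => /andP[vU vp].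
  by apply: self_orth; apply: orth vp vU.
have pp : \rank (perpmx U :&: perpmx T)%MS = (n - \rank (U + T)%MS)%N.
  have e := addsmxE U T.
  transitivity (\rank (kermx (col_mx U T)^T)); last by rewrite mxrank_ker mxrank_tr e.
  apply: rank_eqP => v; rewrite sub_capmx /perpmx !sub_kermx tr_col_mx mul_mx_row.
  by rewrite row_mx_eq0.
have sV := mxrank_sum_cap (perpmx U) (perpmx T); rewrite -/V pp !rk_perp in sV.
have sUT := mxrank_sum_cap U T.
have sUpU := mxrank_sum_cap U (perpmx U); rewrite UpU rk_perp in sUpU.
have UV : \rank (U + V)%MS = n.
  apply/eqP; rewrite eqn_leq rank_leq_col /=.
  have : (\rank (U + perpmx U)%MS <= \rank (U + V)%MS)%N.
    by apply: mxrankS; apply: addsmxS => //; apply: addsmxSl.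
  have : (\rank U <= n)%N by apply: rank_leq_col.
  lia.
have sW := mxrank_sum_cap U V; rewrite UV -/W in sW.
have bk : [/\ (\rank U <= n)%N, (\rank T <= n)%N & (\rank (U + T)%MS <= n)%N].
  by split; apply: rank_leq_col.
have iU : (\rank (U :&: T)%MS <= \rank U)%N by apply/mxrankS/capmxSl.
have iT : (\rank (U :&: T)%MS <= \rank T)%N by apply/mxrankS/capmxSr.
have rW : \rank W = (\rank U - \rank (U :&: T)%MS)%N.
  case: bk => b1 b2 b3; lia.
have WT : \rank (W :&: T)%MS = 0%N.
  apply: rank0P => v; rewrite !sub_capmx => /andP[/andP[vU /sub_addsmxP [u ev]] vT].
  apply: self_orth; rewrite {1}ev mulmxDl.
  by rewrite (orth (submxMl _ _) vU) (orth (submxMl _ _) vT) addr0.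
split => // Z TZ.
set C := (U :&: T)%MS.
have CW : \rank (C :&: W)%MS = 0%N.
  apply: rank0P => v; rewrite !sub_capmx => /andP[/andP[_ vT] /andP[vU vV]].
  by apply: (rank0_sub WT); rewrite !sub_capmx vU vV vT.
have sCW := mxrank_sum_cap C W; rewrite CW rW addn0 in sCW.
have CWU : (C + W <= U)%MS by rewrite addsmx_sub !capmxSl.
have UCW : (U <= C + W)%MS.
  have := mxrank_leqif_sup CWU; rewrite sCW.
  have : (\rank C <= \rank U)%N by [].
  move=> _ [_ <-]; apply/eqP; rewrite /C; lia.
have e : \rank (U :&: Z)%MS = \rank (C + (W :&: Z))%MS.
  apply: rank_eqP => v; apply/idP/idP.
    rewrite sub_capmx => /andP[vU vZ].
    have := submx_trans vU UCW; case/sub_addsmxP => u ev.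
    have aC : (u.1 *m C <= C)%MS by apply: submxMl.
    have bW : (u.2 *m W <= W)%MS by apply: submxMl.
    have aZ : (u.1 *m C <= Z)%MS.
      by apply: submx_trans aC _; apply: submx_trans TZ; apply: capmxSr.
    have bZ : (u.2 *m W <= Z)%MS.
      have -> : u.2 *m W = v - u.1 *m C by rewrite ev addrC addKr.
      by apply: addmx_sub => //; rewrite eqmx_opp.
    by rewrite ev; apply: addmx_sub_adds => //; rewrite sub_capmx bW bZ.
  move=> h; apply: submx_trans h _; rewrite addsmx_sub !sub_capmx.
  rewrite capmxSl (submx_trans (capmxSr _ _) TZ) /=.
  by rewrite (submx_trans (capmxSl _ _) (capmxSl _ _)) capmxSr.
have sCWZ := mxrank_sum_cap C (W :&: Z)%MS.
have : \rank (C :&: (W :&: Z))%MS = 0%N.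
  apply/eqP; rewrite -leqn0 -CW; apply: mxrankS; apply: capmxS => //; exact: capmxSl.
lia.
Qed.

Definition gf (U : 'M[R]_n) (S : {set 'I_m}) : 'M[R]_n := (<< U :&: F S >>)%MS.

Lemma restr_eq (U : 'M[R]_n) (S : {set 'I_m}) :
  (<< U :&: \bigcap_(i in S) (U :&: H i) >>)%MS = gf U S.
Proof.
apply: eq_genmx; apply/eqmxP/rV_eqP => u; rewrite !sub_capmx.
case uU: (u <= U)%MS => //=.
apply/sub_bigcapmxP/sub_bigcapmxP => h i iS; have := h i iS.
  by rewrite sub_capmx => /andP[].
by rewrite sub_capmx uU.
Qed.

Lemma gf_valid (U : 'M[R]_n) (S : {set 'I_m}) : gf U [set i in S | ~~ (U <= H i)%MS] = gf U S.
Proof.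
apply: eq_genmx; apply/eqmxP/rV_eqP => u; rewrite !sub_capmx.
case uU: (u <= U)%MS => //=.
apply/sub_bigcapmxP/sub_bigcapmxP => h i iS.
  case: (boolP (U <= H i)%MS) => [UH|nUH]; first exact: submx_trans uU UH.
  by apply: h; rewrite inE iS.
by apply: h; move: iS; rewrite inE => /andP[].
Qed.

Lemma restrP (U X : 'M[R]_n) : restr_flat alpha U X <-> exists S, X = gf U S.
Proof.
split => [[S [_ ->]]|[S ->]]; first by exists S; rewrite restr_eq.
exists [set i in S | ~~ (U <= H i)%MS]; split.
  by move=> i; rewrite inE => /andP[].
by rewrite restr_eq gf_valid.
Qed.

Lemma gf_le (U : 'M[R]_n) (S S' : {set 'I_m}) :
  (gf U S <= gf U S')%MS = (\rank (U :&: F (S :|: S'))%MS == \rank (U :&: F S)%MS).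
Proof.
rewrite /gf !genmxE.
set A := (U :&: F S)%MS.
have -> : (A <= U :&: F S')%MS = (A <= A :&: F S')%MS.
  by rewrite /A !sub_capmx capmxSl capmxSr.
have -> : \rank (U :&: F (S :|: S'))%MS = \rank (A :&: F S')%MS.
  apply: rank_eqP => u; rewrite !sub_capmx subFU.
  by rewrite andbA.
by rewrite (mxrank_leqif_sup (capmxSl A (F S'))).2.
Qed.

Lemma lattice_from_rank (U1 U2 : 'M[R]_n) :
  (forall S, \rank (U1 :&: F S)%MS = \rank (U2 :&: F S)%MS) ->
  lattice_iso (restr_flat alpha U1) (restr_flat alpha U2).
Proof.
move=> hr.
have hle : forall S S', (gf U1 S <= gf U1 S')%MS = (gf U2 S <= gf U2 S')%MS.
  by move=> S S'; rewrite !gf_le !hr.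
have heq : forall S S', gf U1 S = gf U1 S' -> gf U2 S = gf U2 S'.
  move=> S S' e; rewrite /gf; apply: eq_genmx; apply/eqmxP.
  have h1 : (gf U2 S <= gf U2 S')%MS by rewrite -hle e submx_refl.
  have h2 : (gf U2 S' <= gf U2 S)%MS by rewrite -hle e submx_refl.
  by move: h1 h2; rewrite /gf !genmxE => -> ->.
pose ch (X : 'M[R]_n) := epsilon (inhabits set0) (fun S => X = gf U1 S).
have chP : forall S, gf U1 (ch (gf U1 S)) = gf U1 S.
  move=> S; rewrite /ch; set e := epsilon _ _.
  by have := @epsilon_spec _ (inhabits set0) (fun S' => gf U1 S = gf U1 S') (ex_intro _ S erefl).
exists (fun X => gf U2 (ch X)); split; [|split].
- by move=> X _; apply/restrP; exists (ch X).
- move=> Y /restrP [S ->]; exists (gf U1 S); split; first by apply/restrP; exists S.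
  by apply: heq; rewrite chP.
- move=> X Y /restrP [S ->] /restrP [S' ->].
  by rewrite -hle !chP.
Qed.

End D.

Unset Implicit Arguments. Set Strict Implicit.


Theorem corollary2p4 (R : realType) (n m : nat) (alpha : 'I_m -> 'rV[R]_n)
  (alpha_nz : forall j, alpha j != 0) (k : nat) (U1 U2 : 'M[R]_n) :
  (\rank U1 = k -> \rank U2 = k ->
   forall i : nat, (i <= k)%N ->
   forall P : (ksub n (k - i)%N -> R) -> Prop,
     flat_k alpha _ P ->
     S_iP alpha k i P U1 -> S_iP alpha k i P U2 ->
     lattice_iso (restr_flat alpha U1) (restr_flat alpha U2))
  /\
  (\rank U1 = k -> \rank U2 = k ->
   \rank (Tmx alpha) = 0%N ->
   forall P : (ksub n k -> R) -> Prop,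
     flat_k alpha _ P ->
     flat_interior alpha _ P (plvec k U1) -> flat_interior alpha _ P (plvec k U2) ->
     lattice_iso (restr_flat alpha U1) (restr_flat alpha U2)).
Proof.
have hT : forall S, (Tmx alpha <= flatmx alpha S)%MS.
  by move=> S; apply: subFS; apply: subsetT.
split.
  move=> r1 r2 i ik P fP [_ [t1 h1]] [_ [t2 h2]].
  have [a1 b1 c1] := decomp U1 (Tmx alpha).
  have [a2 b2 c2] := decomp U2 (Tmx alpha).
  apply: lattice_from_rank => S; rewrite (c1 _ (hT S)) (c2 _ (hT S)) t1 t2.
  congr (_ + _)%N; apply: (core alpha_nz (P := P)) => //.
    by rewrite a1 r1 t1.
  by rewrite a2 r2 t2.
move=> r1 r2 T0 P fP h1 h2.
apply: lattice_from_rank; apply: (core alpha_nz (P := P)) => //.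
  by apply/eqP; rewrite -leqn0 -T0; apply/mxrankS/capmxSr.
by apply/eqP; rewrite -leqn0 -T0; apply/mxrankS/capmxSr.
Qed.
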